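(* Let $n\ge 2$, $I=\{1,\dots,n-1\}$, and let $Y_n^>$ be the positive subalgebra of the Yangian of $\mathfrak{sl}_n$ (defined in the context). Let $\mathbf{Y}_n^>$ be the $\mathbb{Z}[\frac12]$-subalgebra of $Y_n^>$ generated by the divided powers $e_{i,r}^t/t!$ for $i\in I$, $r,t\in\mathbb{N}$. Then for every positive root $\beta=[i,j]$ ($1\le i\le j\le n-1$) and all $r,t\in\mathbb{N}$, the divided power $$\mathbf{e}_\beta(r)^{(t)}:=\frac{e_\beta(r)^t}{t!}$$ lies in $\mathbf{Y}_n^>$.
   Context: $\mathbb{N}=\{0,1,2,\dots\}$. $(c_{ij})_{i,j\in I}$ is the Cartan matrix of $\mathfrak{sl}_n$: $c_{ii}=2$, $c_{i,i\pm1}=-1$, $c_{ij}=0$ if $|i-j|>1$. $Y_n^>$ is the associative $\mathbb{C}$-algebra generated by $\{e_{i,r}: i\in I, r\in\mathbb{N}\}$ subject to the relations $[e_{i,r+1},e_{j,s}]-[e_{i,r},e_{j,s+1}]=\frac{c_{ij}}{2}(e_{i,r}e_{j,s}+e_{j,s}e_{i,r})$; $[e_{i,r},e_{j,s}]=0$ if $c_{ij}=0$; $[e_{i,r_1},[e_{i,r_2},e_{j,s}]]+[e_{i,r_2},[e_{i,r_1},e_{j,s}]]=0$ if $c_{ij}=-1$. The positive roots of $\mathfrak{sl}_n$ are $[i,j]:=\alpha_i+\alpha_{i+1}+\dots+\alpha_j$ for $1\le i\le j\le n-1$. For $\beta=[i,j]$ and $r\in\mathbb{N}$, $e_\beta(r):=[\cdots[[e_{i,r},e_{i+1,0}],e_{i+2,0}],\dots,e_{j,0}]$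 (so $e_{[i,i]}(r)=e_{i,r}$). *)

(* Defs.v *)
From HB Require Import structures.
From mathcomp Require Import all_boot all_order all_algebra.
From mathcomp Require Import complex.
From mathcomp Require Import Rstruct.
Set Implicit Arguments. Unset Strict Implicit. Unset Printing Implicit Defensive.
Import Order.TTheory GRing.Theory Num.Theory.
Local Open Scope ring_scope.

Definition CC : fieldType := (complex Rdefinitions.R).

Definition cartan (i j : nat) : int :=
  if i == j then (2 : int)
  else if (i == j.+1) || (j == i.+1) then (-1 : int) else (0 : int).

Definition comm {A : ringType} (x y : A) : A := x * y - y * x.

Definition inI (n i : nat) : bool := (1 <= i <= n.-1)%N.

Definition yangian_pos_rels (n : nat) (A : algType CC) (e : nat -> nat -> A) : Prop :=
  (forall i j r s, inI n i -> inI n j ->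
     comm (e i r.+1) (e j s) - comm (e i r) (e j s.+1)
     = ((cartan i j)%:~R / 2%:R : CC) *: (e i r * e j s + e j s * e i r))
  /\ (forall i j r s, inI n i -> inI n j -> cartan i j = (0 : int) ->
     comm (e i r) (e j s) = 0)
  /\ (forall i j r1 r2 s, inI n i -> inI n j -> cartan i j = (-1 : int) ->
     comm (e i r1) (comm (e i r2) (e j s)) + comm (e i r2) (comm (e i r1) (e j s)) = 0).

Definition divpow (A : algType CC) (x : A) (t : nat) : A :=
  ((t`!)%:R^-1 : CC) *: x ^+ t.

Inductive Zhalf_gen (n : nat) (A : algType CC) (e : nat -> nat -> A) : A -> Prop :=
  | zg_gen i r t : inI n i -> Zhalf_gen n e (divpow (e i r) t)
  | zg_one : Zhalf_gen n e 1
  | zg_add x y : Zhalf_gen n e x -> Zhalf_gen n e y -> Zhalf_gen n e (x + y)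
  | zg_opp x : Zhalf_gen n e x -> Zhalf_gen n e (- x)
  | zg_mul x y : Zhalf_gen n e x -> Zhalf_gen n e y -> Zhalf_gen n e (x * y)
  | zg_half x : Zhalf_gen n e x -> Zhalf_gen n e ((2%:R^-1 : CC) *: x).

(** Root vector e_[i,j](r) = [...[[e_{i,r}, e_{i+1,0}], e_{i+2,0}], ..., e_{j,0}]. *)
Definition eroot (A : ringType) (e : nat -> nat -> A) (i j r : nat) : A :=
  foldl (fun x k => comm x (e k 0%N)) (e i r) (iota i.+1 (j - i)).

(* Main.v *)
Require Import Defs.
From HB Require Import structures.
From mathcomp Require Import all_boot all_order all_algebra complex Rstruct.
From mathcomp Require Import zify.
Set Implicit Arguments. Unset Strict Implicit. Unset Printing Implicit Defensive.
Import Order.TTheory GRing.Theory Num.Theory.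
Local Open Scope ring_scope.

Lemma zjac (V : zmodType) (p q r s u v : V) :
  p - q - (r - s) = (p - u - (v - s)) + (u - r - (q - v)).
Proof.
rewrite !opprB [RHS]addrACA !subrKA.
by rewrite [RHS]addrACA [LHS]addrACA [- r + _]addrC.
Qed.

Section CommLemmas.
Variable R : ringType.
Implicit Types a b c : R.
Lemma commJ a b c : comm a (comm b c) = comm (comm a b) c + comm b (comm a c).
Proof. rewrite /comm !mulrBr !mulrBl !mulrA. apply: zjac. Qed.
Lemma commA a b : comm a b = - comm b a.
Proof. by rewrite /comm opprB. Qed.
Lemma comm0r a : comm 0 a = 0.
Proof. by rewrite /comm mul0r mulr0 subrr. Qed.
Lemma commr0 a : comm a 0 = 0.
Proof. by rewrite /comm mul0r mulr0 subrr. Qed.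
Lemma commNr a b : comm a (- b) = - comm a b.
Proof. by rewrite /comm mulrN mulNr opprB opprK addrC. Qed.
Lemma commNl a b : comm (- a) b = - comm a b.
Proof. by rewrite /comm mulrN mulNr opprB opprK addrC. Qed.
Lemma commMr a b c : comm a (b * c) = comm a b * c + b * comm a c.
Proof.
rewrite /comm mulrBl mulrBr !mulrA addrA; congr (_ + _).
by rewrite subrK.
Qed.
Lemma comm_deriv (y Q v : R) : comm y Q = 0 -> comm y (comm Q v) = comm Q (comm y v).
Proof. by move=> h; rewrite commJ h comm0r add0r. Qed.
Lemma comm_eq0 a b : comm a b = 0 -> a * b = b * a.
Proof. by move/eqP; rewrite subr_eq0 => /eqP. Qed.
Lemma comm_mulrn a b k : comm a (b *+ k) = comm a b *+ k.
Proof. by rewrite /comm mulrnAr mulrnAl mulrnBl. Qed.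
End CommLemmas.

Lemma natCC_neq0 k : (k.+1%:R : CC) != 0.
Proof. by rewrite pnatr_eq0. Qed.
Lemma factCC_neq0 k : (k`!%:R : CC) != 0.
Proof. by rewrite pnatr_eq0 -lt0n fact_gt0. Qed.

Section Alg.
Variable A : algType CC.
Implicit Types u v w : A.

Lemma mulrn_inj k u v : u *+ k.+1 = v *+ k.+1 -> u = v.
Proof.
move/eqP; rewrite -subr_eq0 -mulrnBl -scaler_nat scaler_eq0 (negbTE (natCC_neq0 k)) /=.
by rewrite subr_eq0 => /eqP.
Qed.
Lemma double0 u : u + u = 0 -> u = 0.
Proof. by move=> h; apply: (@mulrn_inj 1); rewrite mul0rn -h mulr2n. Qed.
Lemma comm_scale (c : CC) u v : comm u (c *: v) = c *: comm u v.
Proof. by rewrite /comm -scalerAr -scalerAl scalerBr. Qed.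

Lemma divpowS (y : A) k : y * divpow y k = divpow y k.+1 *+ k.+1 /\ divpow y k * y = divpow y k.+1 *+ k.+1.
Proof.
have E : divpow y k.+1 *+ k.+1 = (k`!%:R^-1 : CC) *: y ^+ k.+1.
  rewrite /divpow -scaler_nat scalerA factS natrM invfM mulrA mulfV ?mul1r //.
  exact: natCC_neq0.
rewrite E /divpow -scalerAr -scalerAl; split; [by rewrite exprS | by rewrite exprSr].
Qed.

End Alg.

Section Kostant.
Variable A : algType CC.
Variables x y : A.
Let zp := comm y x.
Hypothesis hxz : x * zp = zp * x.
Hypothesis hyz : y * zp = zp * y.

Definition adn m (u : A) := iter m (comm y) u.

Lemma L1 p : comm y (x ^+ p.+1) = (x ^+ p * zp) *+ p.+1.
Proof.
elim: p => [|p IH]; first by rewrite expr0 mul1r expr1.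
rewrite exprSr commMr IH -/zp mulrnAl -(mulrA (x ^+ p)) -hxz (mulrA (x ^+ p)) -exprSr.
by rewrite [in RHS]mulrSr.
Qed.

Lemma adn_mulrn m u k : adn m (u *+ k) = adn m u *+ k.
Proof. by elim: m => [|m IH] //=; rewrite IH comm_mulrn. Qed.
Lemma adn_scale m (c : CC) u : adn m (c *: u) = c *: adn m u.
Proof. by elim: m => [|m IH] //=; rewrite IH comm_scale. Qed.

Lemma L2 m p : adn m (x ^+ (p + m)) *+ p`! = (x ^+ p * zp ^+ m) *+ (p + m)`!.
Proof.
elim: m p => [|m IH] p; first by rewrite addn0 expr0 mulr1.
apply: (@mulrn_inj _ p).
have -> : (p + m.+1 = p.+1 + m)%N by rewrite addnS addSn.
rewrite -mulrnA mulnC -factS /= -comm_mulrn IH comm_mulrn commMr.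
have -> : comm y (zp ^+ m) = 0.
  by apply/eqP; rewrite subr_eq0; apply/eqP; apply: commrX.
rewrite mulr0 addr0 L1 -mulrnAl -mulrA -exprS -!mulrnA.
by rewrite mulrnAl -mulrnA mulnC.
Qed.

Lemma L2' t : adn t (x ^+ t) = zp ^+ t *+ t`!.
Proof. by have := L2 t 0; rewrite add0n expr0 mul1r fact0 mulr1n. Qed.

Definition Fsum (w : A) t :=
  \sum_(0 <= k < t.+1) ((-1) ^+ (t - k) * (divpow y k * w * divpow y (t - k))).

Lemma sign_comm k : y * (-1) ^+ k = (-1) ^+ k * y.
Proof. by rewrite -signr_odd; case: (odd k); rewrite ?expr1 ?expr0 ?mulN1r ?mulrN1 ?mulr1 ?mul1r. Qed.

Lemma Fsum_rec w t : Fsum w t.+1 *+ t.+1 = comm y (Fsum w t).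
Proof.
rewrite /Fsum /comm mulr_sumr mulr_suml -sumrB.
rewrite -sumrMnl.
rewrite (eq_big_nat _ _ (F2 := fun k =>
   ((-1) ^+ (t.+1 - k) * (divpow y k * w * divpow y (t.+1 - k))) *+ k +
   ((-1) ^+ (t.+1 - k) * (divpow y k * w * divpow y (t.+1 - k))) *+ (t.+1 - k))); last first.
  by move=> k /andP[_ hk]; rewrite -mulrnDr subnKC // -ltnS.
rewrite big_split /= [X in X + _]big_nat_recl // [X in _ + X]big_nat_recr //= mulr0n add0r subnn mulr0n addr0.
rewrite -big_split /=; apply: eq_big_nat => k /andP[_ hk].
rewrite subSS subSn // exprS mulN1r.
have [h1 h2] := divpowS y k.
have [h3 h4] := divpowS y (t - k).
congr (_ + _).
  rewrite [RHS]mulrA sign_comm -[RHS]mulrA [y * _]mulrA [y * _]mulrA h1.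
  by rewrite !mulrnAl mulrnAr.
rewrite mulNr mulNrn; congr (- _).
rewrite -[RHS]mulrA -(mulrA (divpow y k * w)) h4.
by rewrite !mulrnAr.
Qed.

Lemma Fsum_fact w t : Fsum w t *+ t`! = adn t w.
Proof.
elim: t => [|t IH].
  rewrite /Fsum big_nat1 /divpow /= fact0 mulr1n expr0 invr1 !scale1r.
  by rewrite mul1r mulr1 mul1r.
by rewrite factS mulrnA Fsum_rec -comm_mulrn IH.
Qed.

Lemma Fsum_divpow t : Fsum (divpow x t) t = divpow zp t.
Proof.
have hf : (0 < t`!)%N := fact_gt0 t.
apply: (@mulrn_inj _ (t`!.-1)); rewrite prednK //.
rewrite Fsum_fact /divpow adn_scale L2'.
by rewrite scalerMnr.
Qed.

Lemma divpow_comm t : divpow (comm x y) t = (-1) ^+ t * Fsum (divpow x t) t.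
Proof.
rewrite Fsum_divpow /divpow -scalerAr -exprNn.
by rewrite /zp -commA.
Qed.

End Kostant.

Section Zhalf.
Variables (n : nat) (A : algType CC) (e : nat -> nat -> A).
Let S := Zhalf_gen n e.
Lemma zg0 : S 0.
Proof. by rewrite -(subrr (1 : A)); apply: zg_add; [exact: zg_one| apply: zg_opp; exact: zg_one]. Qed.
Lemma zg_sign k : S ((-1) ^+ k).
Proof.
elim: k => [|k IH]; first by rewrite expr0; exact: zg_one.
by rewrite exprS; apply: zg_mul => //; apply: zg_opp; exact: zg_one.
Qed.

Lemma kostant (x y : A) :
  (forall t, S (divpow x t)) -> (forall k, S (divpow y k)) ->
  comm x (comm x y) = 0 -> comm y (comm x y) = 0 ->
  forall t, S (divpow (comm x y) t).
Proof.
move=> hx hy c1 c2 t.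
have hxz : x * comm y x = comm y x * x.
  by apply: comm_eq0; rewrite [comm y x]commA commNr c1 oppr0.
have hyz : y * comm y x = comm y x * y.
  by apply: comm_eq0; rewrite [comm y x]commA commNr c2 oppr0.
rewrite (divpow_comm hxz hyz); apply: zg_mul; first exact: zg_sign.
rewrite /Fsum; apply: (big_ind S); [exact: zg0 | by move=> *; apply: zg_add |].
move=> k _; apply: zg_mul; first exact: zg_sign.
by apply: zg_mul; [apply: zg_mul; [apply: hy | apply: hx] | apply: hy].
Qed.
End Zhalf.

Lemma cartan_S k : cartan k k.+1 = (-1 : int).
Proof. by rewrite /cartan (ltn_eqF (ltnSn k)) eqxx orbT. Qed.
Lemma cartan_S' k : cartan k.+1 k = (-1 : int).
Proof. by rewrite /cartan (gtn_eqF (ltnSn k)) eqxx. Qed.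
Lemma cartan_far k l : (k.+2 <= l)%N -> cartan l k = 0.
Proof.
move=> h; rewrite /cartan.
case: eqP => [?|_]; first lia.
case: eqP => [?|_]; first lia.
case: eqP => [?|_] //; lia.
Qed.

Section Yang.
Variables (n : nat) (A : algType CC) (e : nat -> nat -> A).
Hypothesis rels : yangian_pos_rels n e.
Variables (i r : nat).
Hypothesis hi : (1 <= i)%N.

Let E j := eroot e i j r.

Lemma eroot_ii : E i = e i r.
Proof. by rewrite /E /eroot subnn. Qed.

Lemma eroot_S j : (i <= j)%N -> E j.+1 = comm (E j) (e j.+1 0%N).
Proof.
move=> hj; rewrite /E /eroot subSn // -(addn1 (j - i)) iotaD foldl_cat /=.
by rewrite addSn subnKC.
Qed.

Lemma serre a b s ra : inI n a -> inI n b -> cartan a b = (-1 : int) ->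
  comm (e a ra) (comm (e a ra) (e b s)) = 0.
Proof.
move=> ha hb hc; case: rels => _ [_ R3]; apply: double0.
exact: R3.
Qed.

Lemma comm_gen_far k l rk rl : inI n k -> inI n l -> (l.+2 <= k)%N ->
  comm (e k rk) (e l rl) = 0.
Proof.
move=> hk hl hkl; case: rels => _ [R2 _]; apply: R2 => //.
exact: cartan_far.
Qed.

Lemma comm_far m k : (i <= m)%N -> (m.+2 <= k)%N -> (k <= n.-1)%N ->
  comm (e k 0%N) (E m) = 0.
Proof.
move=> him hmk hkn.
have hk : inI n k by rewrite /inI hkn andbT; lia.
elim: m him hmk => [|m IH] him hmk; first lia.
case: (eqVneq i m.+1) => [heq|hne].
  by rewrite -heq eroot_ii; apply: comm_gen_far => //; rewrite /inI; lia.
have hm : (i <= m)%N by move: him hne; rewrite leq_eqVlt => /orP[/eqP ->|]; rewrite ?eqxx.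
have hIH : comm (e k 0%N) (E m) = 0 by apply: IH; lia.
rewrite eroot_S // comm_deriv //.
by rewrite comm_gen_far ?commr0 //; rewrite /inI; lia.
Qed.

Lemma ST d : ((i + d).+1 <= n.-1)%N ->
  comm (e (i + d).+1 0%N) (comm (E (i + d)) (e (i + d).+1 0%N)) = 0 /\
  comm (E (i + d)) (comm (E (i + d)) (e (i + d).+1 0%N)) = 0.
Proof.
elim: d => [|d IH] hd.
  rewrite addn0 eroot_ii; split.
    rewrite [comm (e i r) _]commA commNr serre ?oppr0 ?cartan_S' //; rewrite /inI; lia.
  by rewrite serre ?cartan_S //; rewrite /inI; lia.
have hd' : ((i + d).+1 <= n.-1)%N by lia.
have [T S] := IH hd'.
set m := i + d in T S hd hd' *.
rewrite addnS -/m.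
set Y := E m; set v := e m.+1 0%N; set y := e m.+2 0%N.
have hyY : comm y Y = 0 by apply: comm_far; rewrite /m; lia.
have hYy : comm Y y = 0 by rewrite commA hyY oppr0.
have him : (i <= m)%N by rewrite /m leq_addr.
have -> : E m.+1 = comm Y v by rewrite eroot_S.
split.
  rewrite [comm (comm Y v) y]commA commNr comm_deriv // comm_deriv //.
  by rewrite serre ?commr0 ?oppr0 ?cartan_S' //; rewrite /inI /m; lia.
set X := comm Y v; set u := comm v y.
have h1 : comm X y = comm Y u by rewrite /u commJ hYy commr0 addr0.
have hXv : comm X v = 0 by rewrite /X commA T oppr0.
have hXY : comm X Y = 0 by rewrite commA /X S oppr0.
have hvu : comm v u = 0.
  by rewrite /u /v /y serre ?cartan_S //; rewrite /inI /m; lia.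
have hXu : comm X u = 0.
  have e1 : comm X u = comm v (comm Y u) by rewrite {1}/u commJ hXv comm0r add0r h1.
  have e2 : comm v (comm Y u) = - comm X u.
    by rewrite commJ hvu commr0 addr0 [comm v Y]commA commNl.
  by apply: double0; rewrite {1}e1 e2 addNr.
by rewrite h1 commJ hXY comm0r add0r hXu commr0.
Qed.

Lemma main_yang d : (i + d <= n.-1)%N -> forall t, Zhalf_gen n e (divpow (E (i + d)) t).
Proof.
elim: d => [|d IH] hd t.
  by rewrite addn0 eroot_ii; apply: zg_gen; rewrite /inI; lia.
have hd' : (i + d <= n.-1)%N by lia.
have hd2 : ((i + d).+1 <= n.-1)%N by lia.
have [T S] := ST hd2.
have him : (i <= i + d)%N := leq_addr _ _.
rewrite addnS eroot_S //.
apply: kostant => //.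
  exact: IH.
by move=> k; apply: zg_gen; rewrite /inI; lia.
Qed.
End Yang.

Theorem proposition2p7 (n : nat) (hn : (2 <= n)%N)
  (A : algType CC) (e : nat -> nat -> A) (rels : yangian_pos_rels n e) :
  forall i j r t : nat, (1 <= i)%N -> (i <= j)%N -> (j <= n.-1)%N ->
    Zhalf_gen n e (divpow (eroot e i j r) t).
Proof.
move=> i j r t hi hij hjn.
have := @main_yang n A e rels i r hi (j - i).
rewrite subnKC //; apply => //.
Qed.
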